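(* Let $A$ be an Archimedean semiprime $f$-algebra which is bounded quasi-inversion closed, and let $a\in A$ with $a\le 0$. Then $a$ is quasi-invertible and its quasi-inverse $a^\ast$ satisfies $0\le a^\ast$.
   Context: An $f$-algebra is a real associative algebra that is a vector lattice with $A_+A_+\subseteq A_+$ and such that $a\wedge b=0$ implies $ac\wedge b=ca\wedge b=0$ for all $c\in A_+$; it is semiprime if $0$ is its only nilpotent element. An element $a\in A$ is quasi-invertible if there is $a^\ast\in A$ (necessarily unique, called the quasi-inverse) with $a+a^\ast=aa^\ast$; $Q(A)$ denotes the set of such elements. $A$ is bounded quasi-inversion closed if for every $a\in A$, $|a|\le|a^2-a|$ implies $a\in Q(A)$. *)

(* Defs.v *)
From HB Require Import structures.
From mathcomp Require Import all_boot all_order all_algebra.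
From mathcomp Require Import reals.
Set Implicit Arguments. Unset Strict Implicit. Unset Printing Implicit Defensive.
Import Order.TTheory GRing.Theory Num.Theory.
Local Open Scope ring_scope.

Record rieszAlgebra (R : realType) := RieszAlgebra {
  ra_V :> lmodType R;
  ra_mul : ra_V -> ra_V -> ra_V;
  ra_le : ra_V -> ra_V -> Prop;
  ra_meet : ra_V -> ra_V -> ra_V;
  ra_join : ra_V -> ra_V -> ra_V;
  ra_mulA : forall x y z, ra_mul x (ra_mul y z) = ra_mul (ra_mul x y) z;
  ra_mulDl : forall x y z, ra_mul (x + y) z = ra_mul x z + ra_mul y z;
  ra_mulDr : forall x y z, ra_mul x (y + z) = ra_mul x y + ra_mul x z;
  ra_mulZl : forall (c : R) x y, ra_mul (c *: x) y = c *: ra_mul x y;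
  ra_mulZr : forall (c : R) x y, ra_mul x (c *: y) = c *: ra_mul x y;
  ra_le_refl : forall x, ra_le x x;
  ra_le_anti : forall x y, ra_le x y -> ra_le y x -> x = y;
  ra_le_trans : forall x y z, ra_le x y -> ra_le y z -> ra_le x z;
  ra_leD : forall x y z, ra_le x y -> ra_le (x + z) (y + z);
  ra_leZ : forall (c : R) x y, 0 <= c -> ra_le x y -> ra_le (c *: x) (c *: y);
  ra_meet_l : forall x y, ra_le (ra_meet x y) x;
  ra_meet_r : forall x y, ra_le (ra_meet x y) y;
  ra_meet_glb : forall x y z, ra_le z x -> ra_le z y -> ra_le z (ra_meet x y);
  ra_join_l : forall x y, ra_le x (ra_join x y);
  ra_join_r : forall x y, ra_le y (ra_join x y);
  ra_join_lub : forall x y z, ra_le x z -> ra_le y z -> ra_le (ra_join x y) z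
}.

Section FAlgebraDefs.
Variables (R : realType) (A : rieszAlgebra R).

Local Notation "x <=A y" := (ra_le x y) (at level 70).
Local Notation mul := (@ra_mul R A).

Definition ra_pos (x : A) : Prop := 0 <=A x.

Definition ra_abs (x : A) : A := ra_join x (- x).

Definition is_falgebra : Prop :=
  (forall x y : A, ra_pos x -> ra_pos y -> ra_pos (mul x y)) /\
  (forall a b c : A, ra_meet a b = 0 -> ra_pos c ->
     ra_meet (mul a c) b = 0 /\ ra_meet (mul c a) b = 0).

Definition archimedean_ra : Prop :=
  forall x y : A, ra_pos x -> ra_pos y -> (forall n : nat, x *+ n <=A y) -> x = 0.

(* a^(n+1) *)
Definition ra_powS (a : A) (n : nat) : A := iter n (mul a) a.

Definition nilpotent_ra (a : A) : Prop := exists n : nat, ra_powS a n = 0.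

Definition semiprime_ra : Prop := forall a : A, nilpotent_ra a -> a = 0.

Definition is_quasi_inverse (a b : A) : Prop := a + b = mul a b.

Definition quasi_invertible (a : A) : Prop := exists b : A, is_quasi_inverse a b.

Definition bqi_closed : Prop :=
  forall a : A, ra_abs a <=A ra_abs (mul a a - a) -> quasi_invertible a.

End FAlgebraDefs.

(* Main.v *)
Require Import Defs.
From HB Require Import structures.
From mathcomp Require Import all_boot all_order all_algebra.
From mathcomp Require Import reals.
Import Order.TTheory GRing.Theory Num.Theory.
Local Open Scope ring_scope.
Set Implicit Arguments. Unset Strict Implicit.

Section Aux.
Variables (R : realType) (A : rieszAlgebra R).
Local Notation le := (@ra_le R A).
Local Notation mul := (@ra_mul R A).
Local Notation meet := (@ra_meet R A).
Local Notation join := (@ra_join R A).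

Lemma mul0l (y : A) : mul 0 y = 0.
Proof.
have h := ra_mulDl 0 0 y. rewrite addr0 in h.
by have := congr1 (fun t => t - mul 0 y) h; rewrite /= subrr addrK.
Qed.
Lemma mul0r (y : A) : mul y 0 = 0.
Proof.
have h := ra_mulDr y 0 0. rewrite addr0 in h.
by have := congr1 (fun t => t - mul y 0) h; rewrite /= subrr addrK.
Qed.
Lemma mulNl (x y : A) : mul (- x) y = - mul x y.
Proof.
apply/eqP; rewrite -subr_eq0 opprK -ra_mulDl addNr. by rewrite mul0l.
Qed.
Lemma mulNr (x y : A) : mul x (- y) = - mul x y.
Proof.
apply/eqP; rewrite -subr_eq0 opprK -ra_mulDr addNr. by rewrite mul0r.
Qed.
Lemma mulBr (x y z : A) : mul x (y - z) = mul x y - mul x z.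
Proof. by rewrite ra_mulDr mulNr. Qed.

Lemma le_opp (x y : A) : le x y -> le (- y) (- x).
Proof.
move=> h; have := ra_leD (- x - y) h.
by rewrite addrA addrN add0r addrCA addrN addr0.
Qed.
Lemma le_sub (x y z : A) : le (x + z) y -> le x (y - z).
Proof. by move=> h; have := ra_leD (- z) h; rewrite addrK. Qed.
Lemma le_addl (x y : A) : le 0 x -> le y (x + y).
Proof. by move=> h; have := ra_leD y h; rewrite add0r. Qed.

Lemma meetC (x y : A) : meet x y = meet y x.
Proof.
by apply: ra_le_anti; apply: ra_meet_glb; [apply: ra_meet_r|apply: ra_meet_l
  |apply: ra_meet_r|apply: ra_meet_l].
Qed.
Lemma joinC (x y : A) : join x y = join y x.
Proof.
by apply: ra_le_anti; apply: ra_join_lub; [apply: ra_join_r|apply: ra_join_l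
  |apply: ra_join_r|apply: ra_join_l].
Qed.
Lemma meetid (x : A) : meet x x = x.
Proof.
apply: ra_le_anti; first exact: ra_meet_l.
by apply: ra_meet_glb; apply: ra_le_refl.
Qed.
Lemma meetD (x y z : A) : meet (x + z) (y + z) = meet x y + z.
Proof.
apply: ra_le_anti; last first.
  by apply: ra_meet_glb; apply: ra_leD; [apply: ra_meet_l|apply: ra_meet_r].
have h : le (meet (x + z) (y + z) - z) (meet x y).
  apply: ra_meet_glb.
    by have := ra_leD (- z) (ra_meet_l (x + z) (y + z)); rewrite addrK.
  by have := ra_leD (- z) (ra_meet_r (x + z) (y + z)); rewrite addrK.
by have := ra_leD z h; rewrite subrK.
Qed.
Lemma meetN (x y : A) : meet (- x) (- y) = - join x y.
Proof.
apply: ra_le_anti; last first.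
  by apply: ra_meet_glb; apply: le_opp; [apply: ra_join_l|apply: ra_join_r].
rewrite -[meet _ _]opprK; apply: le_opp.
apply: ra_join_lub.
  by rewrite -[x]opprK; apply: le_opp; rewrite opprK; apply: ra_meet_l.
by rewrite -[y]opprK; apply: le_opp; rewrite opprK; apply: ra_meet_r.
Qed.

Lemma abs_pos (x : A) : le 0 x -> ra_abs x = x.
Proof.
move=> h; apply: ra_le_anti; last exact: ra_join_l.
apply: ra_join_lub; first exact: ra_le_refl.
apply: (ra_le_trans _ h); by rewrite -oppr0; apply: le_opp.
Qed.

Hypothesis HF : is_falgebra A.

Lemma disj_mul (x y : A) : meet x y = 0 -> mul x y = 0.
Proof.
case: HF => _ H2 hm.
have hy : ra_pos y by rewrite /ra_pos -hm; apply: ra_meet_r.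
have hx : ra_pos x by rewrite /ra_pos -hm; apply: ra_meet_l.
have [h1 _] := H2 _ _ _ hm hy.
rewrite meetC in h1.
have [_ h2] := H2 _ _ _ h1 hx.
by rewrite meetid in h2.
Qed.

End Aux.

Theorem lemma1 (R : realType) (A : rieszAlgebra R) :
  is_falgebra A -> archimedean_ra A -> semiprime_ra A -> bqi_closed A ->
  forall a : A, ra_le a 0 ->
    quasi_invertible a /\
    (forall b : A, is_quasi_inverse a b -> ra_le 0 b).
Proof.
move=> HF _ HS HQ a ha.
have hna : ra_le 0 (- a) by rewrite -oppr0; apply: le_opp.
have Hpos := proj1 HF.
split.
  apply: HQ.
  have haa : ra_le 0 (ra_mul a a).
    by rewrite -[ra_mul a a]opprK -mulNl -mulNr; apply: Hpos.
  have hle : ra_le (- a) (ra_mul a a - a) by apply: le_addl.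
  rewrite (abs_pos (ra_le_trans hna hle)).
  have -> : ra_abs a = - a.
    by rewrite /ra_abs joinC; have := abs_pos hna; rewrite /ra_abs opprK.
  exact: hle.
move=> b hb.
have [u [v [hu hv hbuv huv]]] : exists u v : A, [/\ ra_le 0 u, ra_le 0 v,
    b = u - v & ra_meet u v = 0].
  exists (ra_join b 0), (ra_join b 0 - b); split.
  - by apply: ra_join_r.
  - by apply: le_sub; rewrite add0r; apply: ra_join_l.
  - by rewrite opprB addrC subrK.
  have := meetD 0 (- b) (ra_join b 0); rewrite add0r [- b + _]addrC => ->.
  by rewrite -{1}oppr0 meetN joinC addNr.
subst b.
have [p hp hap] : exists2 p : A, ra_le 0 p & a = - p by exists (- a); rewrite ?opprK.
subst a. clear ha hna.
have hvu : ra_mul v u = 0 by apply: disj_mul => //; rewrite meetC.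
have hvpu : ra_mul v (ra_mul p u) = 0.
  apply: disj_mul => //; rewrite meetC.
  exact: (proj2 ((proj2 HF) _ _ _ huv hp)).
have E : ra_mul v (- p + (u - v)) = ra_mul v (ra_mul (- p) (u - v)) by rewrite hb.
move: E; rewrite ra_mulA !ra_mulDr !mulNr hvu !mulNl.
rewrite -(ra_mulA v p u) hvpu oppr0 add0r opprK add0r => E.
have E2 : ra_mul v p + ra_mul v v + ra_mul (ra_mul v p) v = 0.
  by rewrite -E -opprD addrN.
have h1 : ra_le 0 (ra_mul v p) by apply: Hpos.
have h2 : ra_le 0 (ra_mul v v) by apply: Hpos.
have h3 : ra_le 0 (ra_mul (ra_mul v p) v) by apply: Hpos => //; apply: Hpos.
have hvv : ra_mul v v = 0.
  apply: ra_le_anti => //.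
  rewrite -E2; apply: (ra_le_trans (@le_addl _ _ _ (ra_mul v v) h1)).
  rewrite [X in ra_le _ X]addrC; exact: le_addl h3.
have -> : v = 0 by apply: HS; exists 1%N.
by rewrite subr0.
Qed.
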